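(* As $n\to\infty$, $$\mathbb{E}[Z_n^2]=4(n\log n)^2+8\gamma\,n^2\log n+\left(16+4\gamma^2-\frac{2\pi^2}{3}\right)n^2+O(n^{3/2}),$$ and $$\operatorname{Var}[Z_n]=\left(16-\frac{2\pi^2}{3}\right)n^2+O(n^{3/2}),$$ where $\gamma$ is Euler's constant.
   Context: Consider the random sequence of trees $(T_n)_{n\ge1}$ with node labels $1,\dots,n$ defined as follows: $T_1$ is a single node labeled $1$; $T_2$ consists of nodes $1,2$ joined by an edge; for $n\ge3$, $T_n$ is obtained from $T_{n-1}$ by adding a node labeled $n$ and an edge joining it to a node $i\in\{1,\dots,n-1\}$ chosen, conditionally on $T_1,\dots,T_{n-1}$, with probability $D_{n-1,i}/(2(n-2))$, where $D_{m,i}$ is the degree of node $i$ in $T_m$. The Zagreb index of $T_n$ is $Z_n=\sum_{j=1}^n D_{n,j}^2$. *)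

(* Defs.v *)
From Stdlib Require Import Reals List.
Open Scope R_scope.

(* A tree T_m on nodes 1..m is represented (for the purpose of the
   distribution of degrees) by its degree list d = [D_{m,1}; ...; D_{m,m}]
   (node j is at index j-1). The attachment process only depends on it. *)

Fixpoint rsum (n : nat) (f : nat -> R) : R :=
  match n with
  | O => 0
  | S k => rsum k f + f k
  end.

Fixpoint incr_at (d : list nat) (i : nat) : list nat :=
  match d, i with
  | nil, _ => nil
  | x :: r, O => S x :: r
  | x :: r, S j => x :: incr_at r j
  end.

Definition attach (d : list nat) (i : nat) : list nat :=
  incr_at d i ++ (1%nat :: nil).

(* expect k d f = E[ f(degree list after k further steps) ] starting from a
   tree with degree list d (m = length d nodes).  One step chooses node
   i+1 with probability D_{m,i+1} / (2(m-1)). *)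
Fixpoint expect (k : nat) (d : list nat) (f : list nat -> R) : R :=
  match k with
  | O => f d
  | S k' =>
      rsum (length d) (fun i =>
        (INR (nth i d 0%nat) / (2 * (INR (length d) - 1))) *
        expect k' (attach d i) f)
  end.

Definition zagreb (d : list nat) : R :=
  fold_right (fun x acc => INR x ^ 2 + acc) 0 d.

(* E[g(T_n)] for n >= 2, starting from T_2 (two nodes of degree 1). *)
Definition En (n : nat) (g : list nat -> R) : R :=
  expect (n - 2) (1%nat :: 1%nat :: nil) g.

Definition EZ (n : nat) : R := En n zagreb.
Definition EZ2 (n : nat) : R := En n (fun d => zagreb d ^ 2).
Definition VarZ (n : nat) : R := EZ2 n - (EZ n) ^ 2.

Definition harmonic (n : nat) : R := rsum n (fun k => / INR (S k)).

Definition is_euler_gamma (g : R) : Prop :=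
  Un_cv (fun n => harmonic n - ln (INR n)) g.

(* Main.v *)
Require Import Defs.
From Stdlib Require Import Reals Lra Lia List.
From Coquelicot Require Import Coquelicot.
Open Scope R_scope.

Lemma RInt_lin3 (f g h : R -> R) a1 a2 a3 a b :
  ex_RInt f a b -> ex_RInt g a b -> ex_RInt h a b ->
  RInt (fun x => a1 * f x + a2 * g x + a3 * h x) a b =
  a1 * RInt f a b + a2 * RInt g a b + a3 * RInt h a b.
Proof.
  intros Hf Hg Hh.
  apply is_RInt_unique.
  apply (is_RInt_plus (V:=R_CompleteNormedModule) (fun x => a1 * f x + a2 * g x) (fun x => a3 * h x)).
  - apply (is_RInt_plus (V:=R_CompleteNormedModule) (fun x => a1 * f x) (fun x => a2 * g x)).
    + apply (is_RInt_scal (V:=R_CompleteNormedModule) f). apply RInt_correct; auto.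
    + apply (is_RInt_scal (V:=R_CompleteNormedModule) g). apply RInt_correct; auto.
  - apply (is_RInt_scal (V:=R_CompleteNormedModule) h). apply RInt_correct; auto.
Qed.

Lemma exRI (f : R -> R) a b : (forall x, ex_derive f x) -> ex_RInt f a b.
Proof.
  intros H. apply (ex_RInt_continuous (V:=R_CompleteNormedModule)). intros z _.
  apply (ex_derive_continuous (K:=R_AbsRing) (V:=R_NormedModule)). auto.
Qed.

Lemma FTC (F f : R -> R) a b : (forall x, is_derive F x (f x)) -> (forall x, ex_derive f x) ->
  RInt f a b = F b - F a.
Proof.
  intros H1 H2. apply is_RInt_unique.
  apply (is_RInt_derive (V:=R_CompleteNormedModule) F f a b).
  - intros; auto.
  - intros. apply (ex_derive_continuous (K:=R_AbsRing) (V:=R_NormedModule)). auto.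
Qed.

Ltac req := match goal with |- @eq _ ?a ?b => change (@eq R a b) end.

Definition B := PI / 2.
Definition Ic n : R := RInt (fun x => cos x ^ (2 * n)) 0 B.
Definition Jc n : R := RInt (fun x => x ^ 2 * cos x ^ (2 * n)) 0 B.

Lemma exI n : ex_RInt (fun x => cos x ^ (2 * n)) 0 B.
Proof. apply exRI. intros. auto_derive. auto. Qed.
Lemma exJ n : ex_RInt (fun x => x ^ 2 * cos x ^ (2 * n)) 0 B.
Proof. apply exRI. intros. auto_derive. auto. Qed.

Lemma cosB : cos B = 0.
Proof. unfold B. apply cos_PI2. Qed.
Lemma sinB : sin B = 1.
Proof. unfold B. apply sin_PI2. Qed.
Lemma Bpos : 0 < B.
Proof. unfold B. pose proof PI_RGT_0. lra. Qed.

Lemma pow_split c n : c ^ (2 * n + 1) = c ^ (2 * n) * c /\ c ^ (2 * n + 2) = c ^ (2 * n) * c ^ 2.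
Proof. split; rewrite pow_add; simpl; ring. Qed.

Lemma Wallis n : 2 * (INR n + 1) * Ic (S n) = (2 * INR n + 1) * Ic n.
Proof.
  assert (E : RInt (fun x => 2 * (INR n + 1) * cos x ^ (2 * S n) + (- (2 * INR n + 1)) * cos x ^ (2 * n)
      + 0 * cos x ^ (2 * n)) 0 B = 0).
  { rewrite (FTC (fun x => sin x * cos x ^ (2 * n + 1))).
    - rewrite cosB, sinB, sin_0. rewrite pow_i by lia. req. ring.
    - intros x. auto_derive; [auto|]. req.
      replace (n + (n + 0) + 1)%nat with (2 * n + 1)%nat by lia.
      replace (Init.Nat.pred (2 * n + 1)) with (2 * n)%nat by lia.
      replace (2 * S n)%nat with (2 * n + 2)%nat by lia.
      destruct (pow_split (cos x) n) as [-> ->]. rewrite plus_INR, mult_INR.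
      replace (INR 2) with 2 by (simpl; ring). replace (INR 1) with 1 by (simpl; ring).
      pose proof (sin2_cos2 x) as H. unfold Rsqr in H.
      assert (Hs : sin x ^ 2 = 1 - cos x ^ 2) by (simpl; lra).
      ring_simplify. rewrite Hs. ring.
    - intros. auto_derive. auto. }
  rewrite RInt_lin3 in E by apply exI. unfold Ic. lra.
Qed.

Lemma Rec n : Ic (S n) + 2 * (INR n + 1) ^ 2 * Jc (S n) - (INR n + 1) * (2 * INR n + 1) * Jc n = 0.
Proof.
  assert (E : RInt (fun x => 1 * cos x ^ (2 * S n) + (2 * (INR n + 1) ^ 2) * (x ^ 2 * cos x ^ (2 * S n))
      + (- ((INR n + 1) * (2 * INR n + 1))) * (x ^ 2 * cos x ^ (2 * n))) 0 B = 0).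
  { pose (F := fun x => x * cos x ^ (2 * n + 2) + (INR n + 1) * (x ^ 2 * sin x * cos x ^ (2 * n + 1))).
    rewrite (FTC F).
    - unfold F. rewrite cosB, sin_0. rewrite (pow_i (2*n+2)), (pow_i (2*n+1)) by lia. req. ring.
    - intros x. unfold F. auto_derive; [auto|]. req.
      replace (n + (n + 0) + 2)%nat with (2 * n + 2)%nat by lia.
      replace (n + (n + 0) + 1)%nat with (2 * n + 1)%nat by lia.
      replace (Init.Nat.pred (2 * n + 2)) with (2 * n + 1)%nat by lia.
      replace (Init.Nat.pred (2 * n + 1)) with (2 * n)%nat by lia.
      replace (2 * S n)%nat with (2 * n + 2)%nat by lia.
      destruct (pow_split (cos x) n) as [-> ->]. rewrite !plus_INR, !mult_INR.
      replace (INR 2) with 2 by (simpl; ring). replace (INR 1) with 1 by (simpl; ring).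
      pose proof (sin2_cos2 x) as H. unfold Rsqr in H.
      assert (Hs : sin x ^ 2 = 1 - cos x ^ 2) by (simpl; lra).
      ring_simplify. rewrite Hs. ring.
    - intros. auto_derive. auto. }
  rewrite (RInt_lin3 _ _ _ _ _ _ _ _ (exI (S n)) (exJ (S n)) (exJ n)) in E. unfold Ic, Jc. lra.
Qed.

Lemma I0 : Ic 0 = B.
Proof.
  unfold Ic. rewrite (FTC (fun x => x)).
  - req. ring.
  - intros x. auto_derive; auto.
  - intros. auto_derive. auto.
Qed.

Lemma J0 : Jc 0 = B ^ 3 / 3.
Proof.
  unfold Jc. rewrite (FTC (fun x => x ^ 3 / 3)).
  - req. field.
  - intros x. auto_derive; auto. req. change (2 * 0)%nat with 0%nat. field.
  - intros. auto_derive. auto.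
Qed.

Lemma xcos_le_sin x : 0 <= x <= PI -> x * cos x <= sin x.
Proof.
  intros Hx.
  assert (E : RInt (fun t => t * sin t) 0 x = sin x - x * cos x - (sin 0 - 0 * cos 0)).
  { rewrite (FTC (fun t => sin t - t * cos t)).
    - reflexivity.
    - intros t. auto_derive; auto. req. ring.
    - intros. auto_derive. auto. }
  rewrite sin_0 in E.
  assert (0 <= RInt (fun t => t * sin t) 0 x).
  { destruct (Req_dec x 0) as [->|Hne].
    - rewrite RInt_point. apply Rle_refl.
    - apply RInt_ge_0; [lra| apply exRI; intros; auto_derive; auto |].
      intros t [Ht1 Ht2].
      apply Rmult_le_pos; [lra|]. apply sin_ge_0; lra. }
  lra.
Qed.

Lemma cos_pow_even_nonneg x n : 0 <= cos x ^ (2 * n).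
Proof. rewrite pow_mult. apply pow_le. apply pow2_ge_0. Qed.

Lemma Jc_nonneg n : 0 <= Jc n.
Proof.
  unfold Jc. apply RInt_ge_0; [pose proof Bpos; lra | apply exJ |].
  intros x _. apply Rmult_le_pos; [apply pow2_ge_0 | apply cos_pow_even_nonneg].
Qed.

Lemma Ic_pos n : 0 < Ic n.
Proof.
  induction n.
  - rewrite I0. apply Bpos.
  - pose proof (Wallis n). pose proof (pos_INR n).
    assert (Ic (S n) = (2 * INR n + 1) * Ic n / (2 * (INR n + 1))) by (rewrite <- H; field; lra).
    rewrite H1. apply Rdiv_lt_0_compat; [apply Rmult_lt_0_compat|]; lra.
Qed.

Lemma Jc_bound n : Jc (S n) <= Ic n - Ic (S n).
Proof.
  assert (E : RInt (fun x => 1 * cos x ^ (2 * n) + (-1) * cos x ^ (2 * S n) + 0 * cos x ^ (2 * n)) 0 B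
     = Ic n - Ic (S n)).
  { rewrite (RInt_lin3 _ _ _ _ _ _ _ _ (exI n) (exI (S n)) (exI n)). unfold Ic. req. ring. }
  rewrite <- E. unfold Jc. apply RInt_le.
  - pose proof Bpos; lra.
  - apply exJ.
  - apply exRI. intros. auto_derive. auto.
  - intros x [H1 H2].
    assert (Hc : 0 <= cos x) by (apply cos_ge_0; unfold B in H2; lra).
    assert (Hxs : x * cos x <= sin x) by (apply xcos_le_sin; unfold B in H2; pose proof PI_RGT_0; lra).
    assert (0 <= x * cos x) by (apply Rmult_le_pos; lra).
    replace (2 * S n)%nat with (2 * n + 2)%nat by lia.
    destruct (pow_split (cos x) n) as [_ ->].
    pose proof (cos_pow_even_nonneg x n).
    pose proof (sin2_cos2 x). unfold Rsqr in H3.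
    assert ((x * cos x) ^ 2 <= sin x ^ 2) by (apply pow_incr; lra).
    replace (1 * cos x ^ (2 * n) + -1 * (cos x ^ (2 * n) * cos x ^ 2) + 0 * cos x ^ (2 * n))
      with (sin x ^ 2 * cos x ^ (2 * n))
      by (assert (Hs : sin x ^ 2 = 1 - cos x ^ 2) by (simpl; lra); rewrite Hs; ring).
    replace (x ^ 2 * (cos x ^ (2 * n) * cos x ^ 2)) with ((x * cos x) ^ 2 * cos x ^ (2 * n)) by ring.
    apply Rmult_le_compat_r; auto.
Qed.

Definition rr n := Jc n / Ic n.

Lemma rr_step n : rr n - rr (S n) = / (2 * (INR n + 1) ^ 2).
Proof.
  unfold rr. pose proof (Wallis n). pose proof (Rec n). pose proof (Ic_pos n). pose proof (Ic_pos (S n)).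
  pose proof (pos_INR n).
  assert (E1 : Ic (S n) = (2 * INR n + 1) * Ic n / (2 * (INR n + 1))) by (rewrite <- H; field; lra).
  assert (E2 : Jc (S n) = ((INR n + 1) * (2 * INR n + 1) * Jc n - Ic (S n)) / (2 * (INR n + 1) ^ 2)).
  { assert (2 * (INR n + 1) ^ 2 <> 0) by nra. field_simplify_eq; [nra|lra]. }
  rewrite E2, E1. field. repeat split; try lra. 
Qed.

Definition H2 (n : nat) : R := rsum n (fun i => / INR (S i) ^ 2).

Lemma H2_S n : H2 (S n) = H2 n + / (INR n + 1) ^ 2.
Proof. unfold H2. change (rsum (S n) ?f) with (rsum n f + f n). cbv beta. rewrite S_INR. reflexivity. Qed.

Lemma rr_sum N : rr 0 - rr N = H2 N / 2.
Proof.
  induction N.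
  - unfold H2; simpl. lra.
  - rewrite H2_S. pose proof (rr_step N). pose proof (pos_INR N).
    replace (rr 0 - rr (S N)) with ((rr 0 - rr N) + (rr N - rr (S N))) by ring.
    rewrite IHN, H. field. lra.
Qed.

Lemma rr0 : rr 0 = PI ^ 2 / 12.
Proof. unfold rr. rewrite I0, J0. pose proof Bpos. unfold B in *. field. lra. Qed.

Lemma Basel_rate N : (1 <= N)%nat -> 0 <= PI ^ 2 / 6 - H2 N <= 2 / INR N.
Proof.
  intros HN.
  assert (E : PI ^ 2 / 6 - H2 N = 2 * rr N) by (pose proof (rr_sum N); rewrite rr0 in H; lra).
  rewrite E. destruct N as [|m]; [lia|].
  pose proof (Ic_pos m). pose proof (Ic_pos (S m)). pose proof (Jc_nonneg (S m)).
  pose proof (Jc_bound m). pose proof (Wallis m). pose proof (pos_INR m).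
  unfold rr. rewrite S_INR. split.
  - apply Rmult_le_pos; [lra|]. apply Rdiv_le_0_compat; lra.
  - assert (Jc (S m) / Ic (S m) <= / (2 * INR m + 1)).
    { apply (Rmult_le_reg_r (Ic (S m) * (2 * INR m + 1))); [nra|].
      field_simplify; [|lra|lra]. nra. }
    assert (/ (2 * INR m + 1) <= / (INR m + 1)) by (apply Rinv_le_contravar; lra).
    unfold Rdiv at 2. lra.
Qed.

Lemma harm_S n : harmonic (S n) = harmonic n + / (INR n + 1).
Proof. unfold harmonic. change (rsum (S n) ?f) with (rsum n f + f n). cbv beta. rewrite S_INR. reflexivity. Qed.

Lemma ln_le_sub1 y : 0 < y -> ln y <= y - 1.
Proof. intros H. pose proof (exp_ineq1_le (ln y)). rewrite exp_ln in H0 by auto. lra. Qed.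

Definition ea n := harmonic n - ln (INR n).

Lemma ea_step n : (1 <= n)%nat -> 0 <= ea n - ea (S n) <= / INR n - / INR (S n).
Proof.
  intros Hn. unfold ea. rewrite harm_S, S_INR.
  assert (Hx : 1 <= INR n) by (apply (le_INR 1); auto).
  assert (E : ln (INR n + 1) = ln (INR n) + ln ((INR n + 1) / INR n)).
  { rewrite <- ln_mult by (try apply Rdiv_lt_0_compat; lra). f_equal. field. lra. }
  assert (E2 : ln ((INR n + 1) / INR n) = - ln (INR n / (INR n + 1))).
  { rewrite <- ln_Rinv by (apply Rdiv_lt_0_compat; lra). f_equal. field. lra. }
  pose proof (ln_le_sub1 ((INR n + 1) / INR n) ltac:(apply Rdiv_lt_0_compat; lra)).
  pose proof (ln_le_sub1 (INR n / (INR n + 1)) ltac:(apply Rdiv_lt_0_compat; lra)).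
  assert ((INR n + 1) / INR n - 1 = / INR n) by (field; lra).
  assert (INR n / (INR n + 1) - 1 = - / (INR n + 1)) by (field; lra).
  split; lra.
Qed.

Lemma ea_mono n m : (1 <= n)%nat -> (n <= m)%nat -> 0 <= ea n - ea m <= / INR n - / INR m.
Proof.
  intros Hn Hm. induction Hm.
  - lra.
  - pose proof (ea_step m ltac:(lia)). lra.
Qed.

Lemma euler_rate g : is_euler_gamma g -> forall n, (1 <= n)%nat ->
  0 <= harmonic n - ln (INR n) - g <= / INR n.
Proof.
  intros Hg n Hn. fold (ea n).
  assert (Hpos : forall m, (1 <= m)%nat -> 0 < / INR m).
  { intros m Hm. apply Rinv_0_lt_compat. apply (lt_INR 0); lia. }
  split.
  - destruct (Rle_or_lt 0 (ea n - g)) as [H|H]; auto. exfalso.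
    destruct (Hg (g - ea n) ltac:(lra)) as [N HN].
    specialize (HN (max N n) ltac:(lia)). unfold R_dist in HN.
    pose proof (ea_mono n (max N n) Hn ltac:(lia)).
    fold (ea (max N n)) in HN. rewrite Rabs_left in HN; lra.
  - destruct (Rle_or_lt (ea n - g) (/ INR n)) as [H|H]; auto. exfalso.
    destruct (Hg (ea n - g - / INR n) ltac:(lra)) as [N HN].
    specialize (HN (max N n) ltac:(lia)). unfold R_dist in HN.
    pose proof (ea_mono n (max N n) Hn ltac:(lia)).
    pose proof (Hpos (max N n) ltac:(lia)).
    fold (ea (max N n)) in HN. rewrite Rabs_right in HN; lra.
Qed.

Lemma rsum_ext n f g : (forall i, (i < n)%nat -> f i = g i) -> rsum n f = rsum n g.
Proof. induction n; intros H; simpl; auto. rewrite IHn; [rewrite H|]; auto; intros; apply H; lia. Qed.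

Lemma rsum_plus n f g : rsum n (fun i => f i + g i) = rsum n f + rsum n g.
Proof. induction n; simpl; [lra|]. rewrite IHn; lra. Qed.

Lemma rsum_scal n c f : rsum n (fun i => c * f i) = c * rsum n f.
Proof. induction n; simpl; [lra|]. rewrite IHn; lra. Qed.

Lemma rsum_shift n f : rsum (S n) f = f 0%nat + rsum n (fun i => f (S i)).
Proof. induction n; simpl in *; [lra|]. rewrite IHn; lra. Qed.

Definition psum (g : nat -> R) (d : list nat) : R := fold_right (fun x acc => g x + acc) 0 d.

Lemma rsum_nth w d : rsum (length d) (fun i => w (nth i d 0%nat)) = psum w d.
Proof.
  induction d; [simpl; lra|].
  change (rsum (S (length d)) (fun i => w (nth i (a::d) 0%nat)) = w a + psum w d).
  rewrite rsum_shift. simpl. rewrite IHd. lra.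
Qed.

Lemma psum_app1 g d : psum g (d ++ 1%nat :: nil) = psum g d + g 1%nat.
Proof. induction d; simpl; [lra|]. rewrite IHd; lra. Qed.

Lemma psum_incr g d i : (i < length d)%nat ->
  psum g (incr_at d i) = psum g d + g (S (nth i d 0%nat)) - g (nth i d 0%nat).
Proof.
  revert i; induction d; intros i Hi; simpl in *; [lia|].
  destruct i; simpl; [lra|]. rewrite IHd; [lra|lia].
Qed.

Lemma psum_poly a b c d :
  psum (fun x => a * INR x + b * INR x ^ 2 + c * INR x ^ 3) d =
  a * psum (fun x => INR x) d + b * psum (fun x => INR x ^ 2) d + c * psum (fun x => INR x ^ 3) d.
Proof. unfold psum in *. induction d as [|y d IH]; cbn [fold_right]; [ring|]. rewrite IH. ring. Qed.

Lemma length_incr d i : length (incr_at d i) = length d.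
Proof. revert i; induction d; intros [|i]; simpl; auto. Qed.

Lemma length_attach d i : length (attach d i) = S (length d).
Proof. unfold attach. rewrite length_app, length_incr. simpl. lia. Qed.

Lemma expect_ext k d f g : (forall e, f e = g e) -> expect k d f = expect k d g.
Proof. revert d; induction k; intros d H; simpl; auto. apply rsum_ext; intros. rewrite IHk; auto. Qed.

Lemma expect_plus k d f g : expect k d (fun e => f e + g e) = expect k d f + expect k d g.
Proof.
  revert d; induction k; intros d; simpl; auto.
  rewrite <- rsum_plus. apply rsum_ext; intros. rewrite IHk. ring.
Qed.

Lemma expect_scal k d c f : expect k d (fun e => c * f e) = c * expect k d f.
Proof.
  revert d; induction k; intros d; simpl; auto.
  rewrite <- rsum_scal. apply rsum_ext; intros. rewrite IHk. ring.
Qed.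

Lemma expect_len k d g f :
  expect k d (fun e => g (length e) * f e) = g (length d + k)%nat * expect k d f.
Proof.
  revert d; induction k; intros d; simpl.
  - rewrite Nat.add_0_r; auto.
  - rewrite <- rsum_scal. apply rsum_ext; intros. rewrite IHk, length_attach.
    replace (S (length d) + k)%nat with (length d + S k)%nat by lia. ring.
Qed.

Lemma expect_step k d f : expect (S k) d f = expect k d (fun e => expect 1 e f).
Proof.
  revert d; induction k; intros d.
  - reflexivity.
  - change (expect (S (S k)) d f) with
      (rsum (length d) (fun i => (INR (nth i d 0%nat) / (2 * (INR (length d) - 1))) *
        expect (S k) (attach d i) f)).
    simpl expect at 2.
    apply rsum_ext; intros. rewrite IHk. reflexivity.
Qed.

Definition P1 d := psum (fun x => INR x) d.
Definition P2 d := psum (fun x => INR x ^ 2) d.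
Definition P3 d := psum (fun x => INR x ^ 3) d.

Definition Inv (d : list nat) : Prop :=
  (2 <= length d)%nat /\ P1 d = 2 * (INR (length d) - 1).

Lemma P1_attach d i : (i < length d)%nat -> P1 (attach d i) = P1 d + 2.
Proof. intros H. unfold P1, attach. rewrite psum_app1, psum_incr by auto. rewrite S_INR. simpl. lra. Qed.

Lemma P2_attach d i : (i < length d)%nat ->
  P2 (attach d i) = P2 d + 2 * INR (nth i d 0%nat) + 2.
Proof. intros H. unfold P2, attach. rewrite psum_app1, psum_incr by auto. rewrite S_INR. simpl. ring. Qed.

Lemma P3_attach d i : (i < length d)%nat ->
  P3 (attach d i) = P3 d + 3 * INR (nth i d 0%nat) ^ 2 + 3 * INR (nth i d 0%nat) + 2.
Proof. intros H. unfold P3, attach. rewrite psum_app1, psum_incr by auto. rewrite S_INR. simpl. ring. Qed.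

Lemma Inv_attach d i : Inv d -> (i < length d)%nat -> Inv (attach d i).
Proof.
  intros [H1 H2] Hi. split; rewrite length_attach; [lia|].
  rewrite P1_attach, H2, S_INR by auto. ring.
Qed.

Lemma expect_inv_ext k d f g : Inv d -> (forall e, Inv e -> f e = g e) ->
  expect k d f = expect k d g.
Proof.
  revert d; induction k; intros d Hd H; simpl; auto.
  apply rsum_ext; intros. rewrite (IHk _ (Inv_attach d i Hd H0) H). auto.
Qed.

Lemma step_gen d F a b c :
  (forall i, (i < length d)%nat ->
     F (attach d i) = a + b * INR (nth i d 0%nat) + c * INR (nth i d 0%nat) ^ 2) ->
  expect 1 d F = (a * P1 d + b * P2 d + c * P3 d) / (2 * (INR (length d) - 1)).
Proof.
  intros H. simpl.
  pose (w := fun x => (/ (2 * (INR (length d) - 1)) * a) * INR x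
     + (/ (2 * (INR (length d) - 1)) * b) * INR x ^ 2
     + (/ (2 * (INR (length d) - 1)) * c) * INR x ^ 3).
  transitivity (rsum (length d) (fun i => w (nth i d 0%nat))).
  - apply rsum_ext. intros i Hi. rewrite H by auto. unfold w, Rdiv. ring.
  - rewrite rsum_nth. unfold w. rewrite psum_poly. unfold P1, P2, P3, Rdiv. ring.
Qed.

Lemma expect_const k d c : Inv d -> expect k d (fun _ => c) = c.
Proof.
  revert d; induction k; intros d Hd; simpl; auto.
  pose (w := fun x => (c / (2 * (INR (length d) - 1))) * INR x
     + 0 * INR x ^ 2 + 0 * INR x ^ 3).
  transitivity (rsum (length d) (fun i => w (nth i d 0%nat))).
  - apply rsum_ext. intros i Hi. rewrite IHk by (apply Inv_attach; auto). unfold w, Rdiv. ring.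
  - rewrite rsum_nth. unfold w. rewrite psum_poly. destruct Hd as [H1 H2]. fold (P1 d). rewrite H2.
    assert (1 < INR (length d)) by (apply (lt_INR 1); lia).
    field. lra.
Qed.

Lemma Inv_m e : Inv e -> 1 < INR (length e).
Proof. intros [H _]. apply (lt_INR 1); lia. Qed.

Lemma step_P2 e : Inv e -> expect 1 e P2 = P2 e + 2 + / (INR (length e) - 1) * P2 e.
Proof.
  intros He. rewrite (step_gen e P2 (P2 e + 2) 2 0).
  - destruct He as [H1 H2]. rewrite H2. assert (1 < INR (length e)) by (apply (lt_INR 1); lia).
    field. lra.
  - intros. rewrite P2_attach by auto. ring.
Qed.

Lemma step_P3 e : Inv e -> expect 1 e P3 =
  P3 e + 2 + (3/2) * / (INR (length e) - 1) * P2 e + (3/2) * / (INR (length e) - 1) * P3 e.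
Proof.
  intros He. rewrite (step_gen e P3 (P3 e + 2) 3 3).
  - destruct He as [H1 H2]. rewrite H2. assert (1 < INR (length e)) by (apply (lt_INR 1); lia).
    field. lra.
  - intros. rewrite P3_attach by auto. ring.
Qed.

Lemma step_Q e : Inv e -> expect 1 e (fun e => P2 e ^ 2) =
  P2 e ^ 2 + 4 * P2 e + 4 + 2 * / (INR (length e) - 1) * P2 e ^ 2
  + 4 * / (INR (length e) - 1) * P2 e + 2 * / (INR (length e) - 1) * P3 e.
Proof.
  intros He. rewrite (step_gen e (fun e => P2 e ^ 2) ((P2 e + 2)^2) (4 * (P2 e + 2)) 4).
  - destruct He as [H1 H2]. rewrite H2. assert (1 < INR (length e)) by (apply (lt_INR 1); lia).
    field. lra.
  - intros. rewrite P2_attach by auto. ring.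
Qed.

Definition d0 : list nat := 1%nat :: 1%nat :: nil.

Lemma Inv_d0 : Inv d0.
Proof. split; simpl; [lia|]. unfold P1, psum; simpl. lra. Qed.

Fixpoint hh (k : nat) : R :=
  match k with O => 24 | S j => hh j * (2 * INR j + 5) / (2 * INR j + 2) end.

Definition zf k := 2 * (INR k + 1) * harmonic (S k).
Definition sf k := hh k - 6 * (INR k + 1) * harmonic (S k) - 16 * (INR k + 1).
Definition qf k :=
  (INR k + 2) * (INR k + 1) * (16 + 4 * harmonic (S (S k)) ^ 2 - 4 * H2 (S (S k))
     + 12 * harmonic (S (S k)) / (INR k + 2) - 12 / (INR k + 2) ^ 2 + 48 / (INR k + 2))
  - 4 * hh k.

Lemma len_d0 k : INR (length d0 + k) - 1 = INR k + 1.
Proof. rewrite plus_INR. simpl. lra. Qed.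

Lemma EP2 k : expect k d0 P2 = zf k.
Proof.
  induction k.
  - unfold zf, P2, psum; simpl. unfold harmonic; simpl. lra.
  - rewrite expect_step.
    rewrite (expect_inv_ext k d0 _ (fun e => P2 e + (fun _ => 2) e + (fun m => / (INR m - 1)) (length e) * P2 e) Inv_d0)
      by (intros; apply step_P2; auto).
    rewrite !expect_plus, (expect_len k d0 (fun m => / (INR m - 1)) P2), expect_const by apply Inv_d0. cbv beta.
    rewrite len_d0, IHk. unfold zf. rewrite (harm_S (S k)), !S_INR.
    field. split; apply Rgt_not_eq; apply Rlt_gt; pose proof (pos_INR k); lra.
Qed.

Lemma EP3 k : expect k d0 P3 = sf k.
Proof.
  induction k.
  - unfold sf, P3, psum; simpl. unfold harmonic; simpl. lra.
  - rewrite expect_step.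
    rewrite (expect_inv_ext k d0 _ (fun e => P3 e + (fun _ => 2) e
       + (fun m => (3/2) * / (INR m - 1)) (length e) * P2 e
       + (fun m => (3/2) * / (INR m - 1)) (length e) * P3 e) Inv_d0)
      by (intros; apply step_P3; auto).
    rewrite !expect_plus, (expect_len k d0 (fun m => (3/2) * / (INR m - 1)) P2),
      (expect_len k d0 (fun m => (3/2) * / (INR m - 1)) P3), expect_const by apply Inv_d0.
    cbv beta.
    rewrite len_d0, IHk, EP2. unfold sf, zf. rewrite (harm_S (S k)). simpl hh. rewrite !S_INR.
    field. pose proof (pos_INR k). repeat split; apply Rgt_not_eq; lra.
Qed.

Lemma EQ k : expect k d0 (fun e => P2 e ^ 2) = qf k.
Proof.
  induction k.
  - unfold qf, P2, psum; simpl. unfold harmonic, H2; simpl. field.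
  - rewrite expect_step.
    rewrite (expect_inv_ext k d0 _ (fun e => P2 e ^ 2 + (fun _ => 4) e * P2 e + (fun _ => 4) e
       + (fun m => 2 * / (INR m - 1)) (length e) * P2 e ^ 2
       + (fun m => 4 * / (INR m - 1)) (length e) * P2 e
       + (fun m => 2 * / (INR m - 1)) (length e) * P3 e) Inv_d0)
      by (intros; apply step_Q; auto).
    rewrite !expect_plus, (expect_len k d0 (fun m => 2 * / (INR m - 1)) (fun e => P2 e ^ 2)),
      (expect_len k d0 (fun m => 4 * / (INR m - 1)) P2),
      (expect_len k d0 (fun m => 2 * / (INR m - 1)) P3),
      (expect_len k d0 (fun _ => 4) P2), expect_const by apply Inv_d0.
    cbv beta.
    rewrite len_d0, IHk, EP2, EP3. unfold qf, sf, zf.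
    rewrite (harm_S (S (S k))), (H2_S (S (S k))), (harm_S (S k)). simpl hh. rewrite !S_INR.
    field. pose proof (pos_INR k). repeat split; apply Rgt_not_eq; lra.
Qed.

Lemma hh_nonneg k : 0 <= hh k.
Proof.
  induction k; simpl; [lra|]. pose proof (pos_INR k).
  apply Rdiv_le_0_compat; [apply Rmult_le_pos|]; lra.
Qed.

Lemma hh_sq k : hh k ^ 2 <= 576 * (INR k + 1) ^ 3.
Proof.
  induction k; [simpl; lra|].
  simpl hh. rewrite S_INR. pose proof (pos_INR k).
  assert (E : (hh k * (2 * INR k + 5) / (2 * INR k + 2)) ^ 2 =
     hh k ^ 2 * ((2 * INR k + 5) ^ 2 / (2 * INR k + 2) ^ 2)) by (field; lra).
  rewrite E.
  assert (0 <= (2 * INR k + 5) ^ 2 / (2 * INR k + 2) ^ 2).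
  { apply Rdiv_le_0_compat; [apply pow2_ge_0 | apply pow_lt; lra]. }
  apply Rle_trans with (576 * (INR k + 1) ^ 3 * ((2 * INR k + 5) ^ 2 / (2 * INR k + 2) ^ 2)).
  - apply Rmult_le_compat_r; auto.
  - replace (576 * (INR k + 1) ^ 3 * ((2 * INR k + 5) ^ 2 / (2 * INR k + 2) ^ 2))
      with (144 * (INR k + 1) * (2 * INR k + 5) ^ 2) by (field; lra).
    nra.
Qed.

Lemma EZ_form n : (2 <= n)%nat -> EZ n = 2 * (INR n - 1) * (harmonic n - / INR n).
Proof.
  intros Hn. destruct n as [|[|k]]; try lia.
  unfold EZ, En. replace (S (S k) - 2)%nat with k by lia.
  change (expect k d0 P2 = 2 * (INR (S (S k)) - 1) * (harmonic (S (S k)) - / INR (S (S k)))).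
  rewrite EP2. unfold zf. rewrite (harm_S (S k)), !S_INR. pose proof (pos_INR k). field. lra.
Qed.

Lemma EZ2_form n : (2 <= n)%nat -> EZ2 n =
  INR n * (INR n - 1) * (16 + 4 * harmonic n ^ 2 - 4 * H2 n + 12 * harmonic n / INR n
    - 12 / INR n ^ 2 + 48 / INR n) - 4 * hh (n - 2).
Proof.
  intros Hn. destruct n as [|[|k]]; try lia.
  unfold EZ2, En. replace (S (S k) - 2)%nat with k by lia.
  change (expect k d0 (fun e => P2 e ^ 2) = INR (S (S k)) * (INR (S (S k)) - 1) *
    (16 + 4 * harmonic (S (S k)) ^ 2 - 4 * H2 (S (S k)) + 12 * harmonic (S (S k)) / INR (S (S k))
    - 12 / INR (S (S k)) ^ 2 + 48 / INR (S (S k))) - 4 * hh k).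
  rewrite EQ. unfold qf. rewrite !S_INR. pose proof (pos_INR k). field. lra.
Qed.

Lemma ln_bounds x : 1 <= x -> 0 <= ln x /\ ln x <= 2 * sqrt x /\ ln x ^ 2 <= 16 * sqrt x.
Proof.
  intros Hx.
  set (s := sqrt x). set (t := sqrt s).
  assert (Hs : s * s = x) by (apply sqrt_sqrt; lra).
  assert (Hs1 : 1 <= s) by (rewrite <- sqrt_1; apply sqrt_le_1_alt; lra).
  assert (Ht : t * t = s) by (apply sqrt_sqrt; lra).
  assert (Ht1 : 1 <= t) by (rewrite <- sqrt_1; apply sqrt_le_1_alt; lra).
  assert (E : ln x = 4 * ln t).
  { rewrite <- Hs, <- Ht. replace (t * t * (t * t)) with (t ^ 4) by ring.
    rewrite ln_pow by lra. simpl. ring. }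
  pose proof (ln_le_sub1 t ltac:(lra)).
  pose proof (ln_le_sub1 (/ t) ltac:(apply Rinv_0_lt_compat; lra)).
  rewrite ln_Rinv in H0 by lra.
  assert (/ t <= 1) by (rewrite <- Rinv_1; apply Rinv_le_contravar; lra).
  rewrite E. repeat split; nra.
Qed.

Lemma gamma_bounds g : is_euler_gamma g -> 0 <= g <= 1.
Proof.
  intros hg. pose proof (euler_rate g hg 1 ltac:(lia)).
  assert (harmonic 1 = 1) by (unfold harmonic; simpl; lra).
  rewrite H0 in H. simpl INR in H. rewrite ln_1 in H. lra.
Qed.

Lemma key g (hg : is_euler_gamma g) n : (2 <= n)%nat ->
  Rabs (EZ2 n
           - (4 * (INR n * ln (INR n)) ^ 2
              + 8 * g * INR n ^ 2 * ln (INR n)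
              + (16 + 4 * g ^ 2 - 2 * PI ^ 2 / 3) * INR n ^ 2))
     <= 400 * (INR n * sqrt (INR n))
  /\
  Rabs (VarZ n - (16 - 2 * PI ^ 2 / 3) * INR n ^ 2)
     <= 700 * (INR n * sqrt (INR n)).
Proof.
  intros Hn.
  assert (Hx : 2 <= INR n) by (apply (le_INR 2); auto).
  pose proof (gamma_bounds g hg) as Hg.
  pose proof (euler_rate g hg n ltac:(lia)) as He.
  pose proof (Basel_rate n ltac:(lia)) as Hb.
  pose proof (ln_bounds (INR n) ltac:(lra)) as [HL0 [HL1 HL2]].
  pose proof (hh_nonneg (n - 2)) as Hh0.
  pose proof (hh_sq (n - 2)) as Hh1.
  rewrite minus_INR in Hh1 by auto. simpl INR in Hh1.
  unfold VarZ. rewrite EZ2_form, EZ_form by auto.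
  set (x := INR n) in *. set (s := sqrt x) in *. set (L := ln x) in *.
  set (H := harmonic n) in *. set (Q := H2 n) in *. set (h := hh (n - 2)) in *.
  assert (Hs : s * s = x) by (apply sqrt_sqrt; lra).
  assert (Hs1 : 1 <= s) by (unfold s; rewrite <- sqrt_1; apply sqrt_le_1_alt; lra).
  assert (Hh : h <= 24 * x * s).
  { assert ((x - 2 + 1) ^ 3 <= x ^ 3) by (apply pow_incr; lra).
    assert (0 <= x * s) by nra. nra. }
  assert (Hpi : PI ^ 2 <= 16) by (pose proof PI_4; pose proof PI_RGT_0; nra).
  assert (Hinv : x * / x = 1) by (field; lra).
  assert (Hinv1 : 0 < / x <= 1/2).
  { split; [apply Rinv_0_lt_compat; lra|]. apply Rle_trans with (/ 2); [apply Rinv_le_contravar; lra| lra]. }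
  set (eps := H - L - g) in *. set (del := PI ^ 2 / 6 - Q) in *.
  assert (Heps : eps = H - L - g) by reflexivity. assert (Hdel : del = PI ^ 2 / 6 - Q) by reflexivity.
  assert (ED : x * (x - 1) * (16 + 4 * H ^ 2 - 4 * Q + 12 * H / x - 12 / x ^ 2 + 48 / x) - 4 * h
    - (4 * (x * L) ^ 2 + 8 * g * x ^ 2 * L + (16 + 4 * g ^ 2 - 2 * PI ^ 2 / 3) * x ^ 2)
    = 4 * x ^ 2 * eps * (2 * (L + g) + eps) + 4 * x ^ 2 * del
      - x * (16 + 4 * H ^ 2 - 4 * Q) + (x - 1) * (12 * H + 48) - 12 * (x - 1) / x - 4 * h).
  { unfold eps, del. field. lra. }
  assert (Hxe : 0 <= x * eps <= 1) by (split; nra).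
  assert (T1 : 0 <= 4 * x ^ 2 * eps * (2 * (L + g) + eps) <= 4 * x * (2 * L + 3)).
  { replace (4 * x ^ 2 * eps * (2 * (L + g) + eps)) with (4 * x * (x * eps) * (2 * (L + g) + eps)) by ring.
    assert (eps <= 1) by lra. split.
    - apply Rmult_le_pos; [|lra]. apply Rmult_le_pos; lra.
    - assert (0 <= 2 * (L + g) + eps <= 2 * L + 3) by lra.
      assert (x * eps * (2 * (L + g) + eps) <= 1 * (2 * L + 3)) by (apply Rmult_le_compat; lra).
      nra. }
  assert (T2 : 0 <= 4 * x ^ 2 * del <= 8 * x).
  { assert (x * del <= 2) by (replace 2 with (x * (2 / x)) by (field; lra); apply Rmult_le_compat_l; lra).
    split; nra. }
  assert (HH : 0 <= H <= L + 2) by lra.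
  assert (T3 : 0 <= x * (16 + 4 * H ^ 2 - 4 * Q) <= x * (20 + 4 * (L + 2) ^ 2)).
  { assert (H ^ 2 <= (L + 2) ^ 2) by (apply pow_incr; lra).
    assert (0 <= H ^ 2) by nra.
    assert (0 <= PI ^ 2) by apply pow2_ge_0.
    split; [apply Rmult_le_pos|apply Rmult_le_compat_l]; lra. }
  assert (T4 : 0 <= (x - 1) * (12 * H + 48) <= x * (12 * (L + 2) + 48)).
  { split; [apply Rmult_le_pos|apply Rmult_le_compat]; lra. }
  assert (T5 : 0 <= 12 * (x - 1) / x <= 12).
  { replace (12 * (x - 1) / x) with (12 - 12 * / x) by (field; lra). lra. }
  assert (F1 : x * L <= 2 * (x * s)).
  { replace (2 * (x * s)) with (x * (2 * s)) by ring. apply Rmult_le_compat_l; lra. }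
  assert (F2 : x * L ^ 2 <= 16 * (x * s)).
  { replace (16 * (x * s)) with (x * (16 * s)) by ring. apply Rmult_le_compat_l; lra. }
  assert (F3 : x <= x * s).
  { rewrite <- (Rmult_1_r x) at 1. apply Rmult_le_compat_l; lra. }
  assert (F4 : 1 <= x * s) by lra.
  assert (F5 : 0 <= x * L) by (apply Rmult_le_pos; lra).
  assert (Part1 : Rabs (4 * x ^ 2 * eps * (2 * (L + g) + eps) + 4 * x ^ 2 * del
      - x * (16 + 4 * H ^ 2 - 4 * Q) + (x - 1) * (12 * H + 48) - 12 * (x - 1) / x - 4 * h)
      <= 400 * (x * s)).
  { apply Rabs_le. split; lra. }
  split.
  - rewrite ED. exact Part1.
  - set (W := x * (L + g)). set (V := (x - 1) * (H - / x)).
    assert (E2 : x * (x - 1) * (16 + 4 * H ^ 2 - 4 * Q + 12 * H / x - 12 / x ^ 2 + 48 / x) - 4 * h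
      - (2 * (x - 1) * (H - / x)) ^ 2 - (16 - 2 * PI ^ 2 / 3) * x ^ 2
      = (4 * x ^ 2 * eps * (2 * (L + g) + eps) + 4 * x ^ 2 * del
      - x * (16 + 4 * H ^ 2 - 4 * Q) + (x - 1) * (12 * H + 48) - 12 * (x - 1) / x - 4 * h)
      + 4 * ((W - V) * (W + V))).
    { rewrite <- ED. unfold W, V. field. lra. }
    rewrite E2.
    assert (EWV : W - V = -(x * eps) + H + 1 - / x) by (unfold W, V, eps; field; lra).
    assert (B1 : Rabs (W - V) <= L + 3) by (apply Rabs_le; rewrite EWV; lra).
    assert (Hxg : x * (L + g) <= x * (L + 1)) by (apply Rmult_le_compat_l; lra).
    assert (Hxg0 : 0 <= x * (L + g)) by (apply Rmult_le_pos; lra).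
    assert (HxH : 0 <= (x - 1) * H <= x * (L + 2)) by (split; [apply Rmult_le_pos|apply Rmult_le_compat]; lra).
    assert (EWV2 : W + V = x * (L + g) + (x - 1) * H - (1 - / x)) by (unfold W, V; field; lra).
    assert (B2 : Rabs (W + V) <= x * (2 * L + 3) + 1) by (apply Rabs_le; rewrite EWV2; lra).
    assert (B3 : Rabs ((W - V) * (W + V)) <= (L + 3) * (x * (2 * L + 3) + 1)).
    { rewrite Rabs_mult. apply Rmult_le_compat; auto; apply Rabs_pos. }
    assert (F6 : s <= x * s) by (rewrite <- (Rmult_1_l s) at 1; apply Rmult_le_compat_r; lra).
    assert (B4 : (L + 3) * (x * (2 * L + 3) + 1) = 2 * (x * L ^ 2) + 9 * (x * L) + L + 9 * x + 3) by ring.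
    eapply Rle_trans; [apply Rabs_triang|].
    rewrite Rabs_mult, (Rabs_right 4) by lra. lra.
Qed.


Theorem proposition4p2 (gamma : R) (hg : is_euler_gamma gamma) :
  (exists C N, forall n : nat, (N <= n)%nat ->
     Rabs (EZ2 n
           - (4 * (INR n * ln (INR n)) ^ 2
              + 8 * gamma * INR n ^ 2 * ln (INR n)
              + (16 + 4 * gamma ^ 2 - 2 * PI ^ 2 / 3) * INR n ^ 2))
     <= C * (INR n * sqrt (INR n)))
  /\
  (exists C N, forall n : nat, (N <= n)%nat ->
     Rabs (VarZ n - (16 - 2 * PI ^ 2 / 3) * INR n ^ 2)
     <= C * (INR n * sqrt (INR n))).
Proof.
  split.
  - exists 400, 2%nat. intros n Hn. exact (proj1 (key gamma hg n Hn)).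
  - exists 700, 2%nat. intros n Hn. exact (proj2 (key gamma hg n Hn)).
Qed.
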